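(* Let $f\in\mathcal{A}$. If $\left|\left(\frac{f(z)}{z}\right)'\right|<\frac12$ for all $z\in\Delta\setminus\{0\}$, then $f\in\Omega$. Moreover the constant $\tfrac12$ cannot be replaced by any larger constant: for every $\lambda>\tfrac12$, the function $\widehat f_\lambda(z)=z+\lambda z^2$ satisfies $\left(\widehat f_\lambda(z)/z\right)'=\lambda$ but $\widehat f_\lambda\notin\Omega$.
   Context: $\Delta=\{z\in\mathbb{C}:|z|<1\}$. $\mathcal{A}$ is the class of functions $f$ analytic in $\Delta$ with $f(0)=0$, $f'(0)=1$. $\Omega$ is the class of $f\in\mathcal{A}$ with $|zf'(z)-f(z)|<\tfrac12$ for all $z\in\Delta$. *)

(* Defs.v *)
From Stdlib Require Import Reals.
Open Scope R_scope.

Definition Cplx : Type := (R * R)%type.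
Definition RtoC (x : R) : Cplx := (x, 0).
Definition Cadd (z w : Cplx) : Cplx := (fst z + fst w, snd z + snd w).
Definition Copp (z : Cplx) : Cplx := (- fst z, - snd z).
Definition Csub (z w : Cplx) : Cplx := Cadd z (Copp w).
Definition Cmul (z w : Cplx) : Cplx :=
  (fst z * fst w - snd z * snd w, fst z * snd w + snd z * fst w).
Definition Cinv (z : Cplx) : Cplx :=
  (fst z / (fst z ^ 2 + snd z ^ 2), - snd z / (fst z ^ 2 + snd z ^ 2)).
Definition Cdiv (z w : Cplx) : Cplx := Cmul z (Cinv w).
Definition Cmod (z : Cplx) : R := sqrt (fst z ^ 2 + snd z ^ 2).
Definition C0 : Cplx := (0, 0).
Definition C1 : Cplx := (1, 0).

Definition has_cderiv (f : Cplx -> Cplx) (z l : Cplx) : Prop :=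
  forall eps : R, 0 < eps -> exists delta : R, 0 < delta /\
    forall h : Cplx, 0 < Cmod h < delta ->
      Cmod (Csub (Cdiv (Csub (f (Cadd z h)) (f z)) h) l) < eps.

Definition analytic_in_disc (f : Cplx -> Cplx) : Prop :=
  forall z : Cplx, Cmod z < 1 -> exists l : Cplx, has_cderiv f z l.

Definition in_A (f : Cplx -> Cplx) : Prop :=
  analytic_in_disc f /\ f C0 = C0 /\ has_cderiv f C0 C1.

Definition in_Omega (f : Cplx -> Cplx) : Prop :=
  in_A f /\
  forall z : Cplx, Cmod z < 1 -> exists d : Cplx, has_cderiv f z d /\
    Cmod (Csub (Cmul z d) (f z)) < 1 / 2.

(* Main.v *)
From Stdlib Require Import Reals Lra.
From Coquelicot Require Import Coquelicot.
Require Import Defs.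
From Stdlib Require Import Reals.
Open Scope R_scope.

Lemma Cm_mul (x y : Cplx) : Cmod (Cmul x y) = Cmod x * Cmod y.
Proof. exact (Cmod_mult x y). Qed.
Lemma Cm_add (x y : Cplx) : Cmod (Cadd x y) <= Cmod x + Cmod y.
Proof. exact (Cmod_triangle x y). Qed.
Lemma Cm_opp (x : Cplx) : Cmod (Copp x) = Cmod x.
Proof. exact (Cmod_opp x). Qed.
Lemma Cm_sub (x y : Cplx) : Cmod (Csub x y) <= Cmod x + Cmod y.
Proof. unfold Csub. rewrite <- (Cm_opp y). apply Cm_add. Qed.
Lemma Cm_ge0 (x : Cplx) : 0 <= Cmod x.
Proof. exact (Cmod_ge_0 x). Qed.
Lemma Cm_real (t : R) : Cmod (t, 0) = Rabs t.
Proof. exact (Cmod_R t). Qed.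
Lemma Cm_eq0 (x : Cplx) : Cmod x = 0 -> x = Defs.C0.
Proof. intro H. exact (Cmod_eq_0 x H). Qed.
Lemma Cm_C0 : Cmod Defs.C0 = 0.
Proof. exact Cmod_0. Qed.
Lemma Cm_pos (x : Cplx) : 0 < Cmod x -> x <> Defs.C0.
Proof. intros H E. rewrite E, Cm_C0 in H. lra. Qed.

Lemma Cm_lower (z h : Cplx) : Cmod z - Cmod h <= Cmod (Cadd z h).
Proof.
  assert (E : z = Csub (Cadd z h) h).
  { destruct z, h. unfold Csub, Cadd, Copp; simpl. f_equal; ring. }
  pose proof (Cm_sub (Cadd z h) h). rewrite <- E in H. lra.
Qed.

Lemma sub_id (a b q : Cplx) : Csub a b = Csub (Csub q b) (Csub q a).
Proof. destruct q, a, b. unfold Csub, Cadd, Copp; simpl. f_equal; ring. Qed.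
Lemma add_id (A B : Cplx) : A = Cadd (Csub A B) B.
Proof. destruct A, B. unfold Csub, Cadd, Copp; simpl. f_equal; ring. Qed.

Lemma deriv_unique F z a b : has_cderiv F z a -> has_cderiv F z b -> a = b.
Proof.
  intros Ha Hb.
  assert (Hm : Cmod (Csub a b) = 0).
  { destruct (Rle_lt_or_eq_dec 0 (Cmod (Csub a b)) (Cm_ge0 _)) as [Hp|Hp]; [|auto].
    exfalso. set (e := Cmod (Csub a b) / 2).
    assert (He : 0 < e) by (unfold e; lra).
    destruct (Ha e He) as [d1 [Hd1 H1]]. destruct (Hb e He) as [d2 [Hd2 H2]].
    set (t := Rmin d1 d2 / 2).
    assert (Ht : 0 < t /\ t < d1 /\ t < d2).
    { unfold t. pose proof (Rmin_l d1 d2). pose proof (Rmin_r d1 d2).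
      assert (0 < Rmin d1 d2) by (apply Rmin_glb_lt; lra). lra. }
    set (h := (t, 0) : Cplx).
    assert (Hh : Cmod h = t) by (unfold h; rewrite Cm_real; apply Rabs_right; lra).
    specialize (H1 h ltac:(lra)). specialize (H2 h ltac:(lra)).
    set (q := Cdiv (Csub (F (Cadd z h)) (F z)) h) in *.
    assert (E : Csub a b = Csub (Csub q b) (Csub q a)).
    { apply sub_id. }
    pose proof (Cm_sub (Csub q b) (Csub q a)). rewrite <- E in H. unfold e in *. lra. }
  apply Cm_eq0 in Hm. destruct a as [a1 a2], b as [b1 b2].
  unfold Csub, Cadd, Copp, Defs.C0 in Hm; simpl in Hm. injection Hm. intros. f_equal; lra.
Qed.

Lemma key_idC (z h a b l d : Coquelicot.Complex.C) : z <> RtoC 0 -> h <> RtoC 0 -> (z + h)%C <> RtoC 0 ->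
  (z * l - b - z*z*d = z*(z+h)*((a/(z+h) - b/z)/h - d) + z*h*d - z*((a-b)/h - l))%C.
Proof. intros. field. auto. Qed.

Lemma key_id (z h a b l d : Cplx) : z <> Defs.C0 -> h <> Defs.C0 -> Cadd z h <> Defs.C0 ->
  Csub (Csub (Cmul z l) b) (Cmul (Cmul z z) d) =
  Csub (Cadd (Cmul (Cmul z (Cadd z h))
                 (Csub (Cdiv (Csub (Cdiv a (Cadd z h)) (Cdiv b z)) h) d))
             (Cmul (Cmul z h) d))
       (Cmul z (Csub (Cdiv (Csub a b) h) l)).
Proof. intros H1 H2 H3. exact (key_idC z h a b l d H1 H2 H3). Qed.

Lemma est f z l d : 0 < Cmod z < 1 -> has_cderiv f z l ->
  has_cderiv (fun w => Cdiv (f w) w) z d -> Cmod d < 1/2 ->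
  Cmod (Csub (Cmul z l) (f z)) < 1/2.
Proof.
  intros Hz Hl Hg Hd.
  pose proof (Cm_ge0 d) as Hd0.
  set (e := (1/2 - Cmod d) / (2 * (3 + Cmod d))).
  assert (He : 0 < e) by (unfold e; apply Rdiv_lt_0_compat; lra).
  destruct (Hl e He) as [d1 [Hd1 H1]]. destruct (Hg e He) as [d2 [Hd2 H2]].
  set (t := Rmin (Rmin d1 d2) (Rmin (Cmod z) e) / 2).
  assert (Ht : 0 < t /\ t < d1 /\ t < d2 /\ t < Cmod z /\ t < e).
  { unfold t. pose proof (Rmin_l d1 d2). pose proof (Rmin_r d1 d2).
    pose proof (Rmin_l (Cmod z) e). pose proof (Rmin_r (Cmod z) e).
    pose proof (Rmin_l (Rmin d1 d2) (Rmin (Cmod z) e)).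
    pose proof (Rmin_r (Rmin d1 d2) (Rmin (Cmod z) e)).
    assert (0 < Rmin (Rmin d1 d2) (Rmin (Cmod z) e)).
    { apply Rmin_glb_lt; apply Rmin_glb_lt; lra. }
    lra. }
  set (h := (t, 0) : Cplx).
  assert (Hh : Cmod h = t) by (unfold h; rewrite Cm_real; apply Rabs_right; lra).
  specialize (H1 h ltac:(lra)). specialize (H2 h ltac:(lra)).
  cbv beta in H2.
  pose proof (Cm_lower z h) as Hlow. pose proof (Cm_add z h) as Hup.
  assert (Nz : z <> Defs.C0) by (apply Cm_pos; lra).
  assert (Nh : h <> Defs.C0) by (apply Cm_pos; lra).
  assert (Nzh : Cadd z h <> Defs.C0) by (apply Cm_pos; lra).
  pose proof (key_id z h (f (Cadd z h)) (f z) l d Nz Nh Nzh) as E.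
  set (q := Cdiv (Csub (Cdiv (f (Cadd z h)) (Cadd z h)) (Cdiv (f z) z)) h) in *.
  set (p := Cdiv (Csub (f (Cadd z h)) (f z)) h) in *.
  set (A := Csub (Cmul z l) (f z)) in *.
  set (B := Cmul (Cmul z z) d) in *.
  assert (EA : A = Cadd (Csub A B) B).
  { apply add_id. }
  pose proof (Cm_add (Csub A B) B) as T1. rewrite <- EA in T1.
  assert (TB : Cmod B <= Cmod d).
  { unfold B. rewrite !Cm_mul. pose proof (Cm_ge0 z). assert (Cmod z * Cmod z <= 1) by nra. nra. }
  rewrite E in T1.
  pose proof (Cm_sub (Cadd (Cmul (Cmul z (Cadd z h)) (Csub q d)) (Cmul (Cmul z h) d))
                     (Cmul z (Csub p l))) as T2.
  pose proof (Cm_add (Cmul (Cmul z (Cadd z h)) (Csub q d)) (Cmul (Cmul z h) d)) as T3.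
  rewrite !Cm_mul in T2. rewrite !Cm_mul in T3. rewrite Hh in T3.
  pose proof (Cm_ge0 z). pose proof (Cm_ge0 (Cadd z h)).
  pose proof (Cm_ge0 (Csub q d)). pose proof (Cm_ge0 (Csub p l)).
  assert (X1 : Cmod z * Cmod (Cadd z h) * Cmod (Csub q d) <= 2 * e).
  { assert (Cmod z * Cmod (Cadd z h) <= 2) by nra. nra. }
  assert (X2 : Cmod z * t * Cmod d <= e * Cmod d) by (assert (Cmod z * t <= e) by nra; nra).
  assert (X3 : Cmod z * Cmod (Csub p l) <= e) by nra.
  assert (X4 : (3 + Cmod d) * e = (1/2 - Cmod d) / 2).
  { unfold e. field. lra. }
  nra.
Qed.

Lemma fh_id (lam : R) (z h : Coquelicot.Complex.C) : h <> RtoC 0 ->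
  (((z + h) + lam * ((z + h) * (z + h)) - (z + lam * (z * z))) / h
     - (1 + Coquelicot.Complex.RtoC (2 * lam)%R * z) = lam * h)%C.
Proof. intros. rewrite RtoC_mult. field. auto. Qed.

Lemma g_id (lam : R) (z h : Coquelicot.Complex.C) : h <> RtoC 0 -> z <> RtoC 0 -> (z + h)%C <> RtoC 0 ->
  (((((z + h) + lam * ((z + h) * (z + h)))/(z+h)) - ((z + lam * (z * z))/z)) / h
     - lam = 0)%C.
Proof. intros. field. auto. Qed.

Lemma fh_deriv (lam : R) (z : Cplx) : 0 < lam ->
  has_cderiv (fun z : Cplx => Cadd z (Cmul (RtoC lam) (Cmul z z))) z
    (Cadd Defs.C1 (Cmul (RtoC (2 * lam)) z)).
Proof.
  intros Hl eps He. exists (eps / lam). split; [apply Rdiv_lt_0_compat; lra|].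
  intros h [H1 H2].
  assert (Nh : h <> Defs.C0) by (apply Cm_pos; lra).
  pose proof (fh_id lam z h Nh) as E.
  change (Cmod (Csub (Cdiv (Csub (Cadd (Cadd z h) (Cmul (RtoC lam) (Cmul (Cadd z h) (Cadd z h))))
      (Cadd z (Cmul (RtoC lam) (Cmul z z)))) h) (Cadd Defs.C1 (Cmul (RtoC (2 * lam)) z))) < eps).
  change (Csub (Cdiv (Csub (Cadd (Cadd z h) (Cmul (RtoC lam) (Cmul (Cadd z h) (Cadd z h))))
      (Cadd z (Cmul (RtoC lam) (Cmul z z)))) h) (Cadd Defs.C1 (Cmul (RtoC (2 * lam)) z)) =
      Cmul (RtoC lam) h) in E.
  rewrite E, Cm_mul. unfold RtoC. rewrite Cm_real, Rabs_right by lra.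
  apply (Rmult_lt_compat_l lam) in H2; [|lra].
  replace (lam * (eps / lam)) with eps in H2 by (field; lra). lra.
Qed.

Theorem lemma4p1 :
  (forall f : Cplx -> Cplx, in_A f ->
     (forall z : Cplx, 0 < Cmod z < 1 ->
        exists d : Cplx, has_cderiv (fun w => Cdiv (f w) w) z d /\ Cmod d < 1 / 2) ->
     in_Omega f)
  /\
  (forall lam : R, 1 / 2 < lam ->
     let fh := fun z : Cplx => Cadd z (Cmul (RtoC lam) (Cmul z z)) in
     in_A fh /\
     (forall z : Cplx, 0 < Cmod z < 1 ->
        has_cderiv (fun w => Cdiv (fh w) w) z (RtoC lam)) /\
     ~ in_Omega fh).
Proof.
  split.
  - intros f HA Hg. split; [exact HA|].
    destruct HA as [Han [Hf0 Hf1]].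
    intros z Hz.
    destruct (Rle_lt_or_eq_dec 0 (Cmod z) (Cm_ge0 z)) as [Hp|Hp].
    + destruct (Han z Hz) as [l Hl]. exists l. split; [exact Hl|].
      destruct (Hg z (conj Hp Hz)) as [d [Hd Hdm]].
      exact (est f z l d (conj Hp Hz) Hl Hd Hdm).
    + symmetry in Hp. apply Cm_eq0 in Hp. subst z.
      exists Defs.C1. split; [exact Hf1|]. rewrite Hf0.
      replace (Csub (Cmul Defs.C0 Defs.C1) Defs.C0) with Defs.C0
        by (unfold Csub, Cmul, Cadd, Copp, Defs.C0, Defs.C1; simpl; f_equal; ring).
      rewrite Cm_C0. lra.
  - intros lam Hlam fh.
    split; [|split].
    + split; [|split].
      * intros z _. eexists. apply fh_deriv. lra.
      * unfold fh, Cadd, Cmul, RtoC, Defs.C0; simpl. f_equal; ring.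
      * replace Defs.C1 with (Cadd Defs.C1 (Cmul (RtoC (2 * lam)) Defs.C0))
          by (unfold Cadd, Cmul, RtoC, Defs.C0, Defs.C1; simpl; f_equal; ring).
        apply fh_deriv. lra.
    + intros z Hz eps He. exists (Cmod z). split; [lra|].
      intros h [H1 H2].
      assert (Nh : h <> Defs.C0) by (apply Cm_pos; lra).
      assert (Nz : z <> Defs.C0) by (apply Cm_pos; lra).
      pose proof (Cm_lower z h).
      assert (Nzh : Cadd z h <> Defs.C0) by (apply Cm_pos; lra).
      pose proof (g_id lam z h Nh Nz Nzh) as E.
      unfold fh. cbv beta.
      change (Csub (Cdiv (Csub (Cdiv (Cadd (Cadd z h) (Cmul (RtoC lam) (Cmul (Cadd z h) (Cadd z h)))) (Cadd z h))
        (Cdiv (Cadd z (Cmul (RtoC lam) (Cmul z z))) z)) h) (RtoC lam) = RtoC 0) in E.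
      rewrite E. unfold RtoC. rewrite Cm_real, Rabs_R0. lra.
    + intros [_ HO].
      set (r := sqrt (/ (2 * lam))).
      assert (Hr2 : r * r = / (2 * lam)).
      { unfold r. apply sqrt_sqrt. left. apply Rinv_0_lt_compat. lra. }
      assert (Hr0 : 0 <= r) by (unfold r; apply sqrt_pos).
      assert (Hinv : / (2 * lam) < 1).
      { rewrite <- Rinv_1. apply Rinv_lt_contravar; lra. }
      assert (Hr1 : r < 1) by nra.
      set (z := (r, 0) : Cplx).
      assert (Hz : Cmod z < 1) by (unfold z; rewrite Cm_real, Rabs_right; lra).
      destruct (HO z Hz) as [d [Hd Hm]].
      pose proof (deriv_unique _ _ _ _ Hd (fh_deriv lam z ltac:(lra))) as Ed.
      subst d.
      replace (Csub (Cmul z (Cadd Defs.C1 (Cmul (RtoC (2 * lam)) z))) (fh z))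
        with ((lam * (r * r), 0) : Cplx) in Hm
        by (unfold fh, z, Csub, Cmul, Cadd, Copp, RtoC, Defs.C1; simpl; f_equal; ring).
      rewrite Cm_real, Rabs_right in Hm by nra.
      rewrite Hr2 in Hm. field_simplify in Hm; lra.
Qed.
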